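(* For $r\ge1$ let $H_r$ be the graph with vertex set $\{t_1,\ldots,t_{2r}\}$ and edge set $\{\{t_i,t_{r+i}\}: 1\le i\le r\}$. Then: (a) the graph $\mathcal{H}_r$ of $I_c(H_r)$ is a bipartite $r$-regular graph with $2^r$ vertices and $r2^{r-1}$ edges; (b) if $G$ is an unmixed bipartite graph without isolated vertices and $r=\alpha_0(G)$, then (after labeling the vertices suitably as $t_1,\dots,t_{2r}$) $G$ has the perfect matching $\{\{t_i,t_{r+i}\}\}_{i=1}^r$, and the graph $\mathcal{G}$ of $I_c(G)$ is a subgraph of $\mathcal{H}_r$. In particular $\mathcal{G}$ is bipartite.
   Context: A graph is unmixed if all its minimal vertex covers (inclusion-minimal vertex sets meeting every edge) have the same size; $\alpha_0$ is the minimum size of a vertex cover. For an unmixed graph with minimal vertex covers $C_1,\ldots,C_m$, the graph of its ideal of covers $I_c$ has vertex set $\{C_1,\ldots,C_m\}$ and $\{C_i,C_j\}$ ($i\neq j$) is an edge iff $|C_i\cup C_j|=|C_i|+1$. *)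

(* Defs.v *)
From mathcomp Require Import all_boot.
Set Implicit Arguments. Unset Strict Implicit. Unset Printing Implicit Defensive.

Definition simple_graph (T : finType) (e : rel T) : Prop :=
  symmetric e /\ irreflexive e.

Definition is_cover (T : finType) (e : rel T) (C : {set T}) : bool :=
  [forall x, forall y, e x y ==> (x \in C) || (y \in C)].

Definition min_covers (T : finType) (e : rel T) : {set {set T}} :=
  [set C | minset (is_cover e) C].

(* alpha_0: minimum size of a vertex cover (setT is always a cover). *)
Definition alpha0 (T : finType) (e : rel T) : nat :=
  \big[minn/#|T|]_(C : {set T} | is_cover e C) #|C|.

Definition unmixed (T : finType) (e : rel T) : Prop :=
  forall C D, C \in min_covers e -> D \in min_covers e -> #|C| = #|D|.

Definition no_isolated (T : finType) (e : rel T) : Prop :=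
  forall x : T, exists y, e x y.

Definition bipartite (T : finType) (e : rel T) : Prop :=
  exists c : T -> bool, forall x y, e x y -> c x != c y.

(* Adjacency in the graph of the ideal of covers I_c: vertices are the
   minimal covers, {C,D} (C <> D) is an edge iff |C :|: D| = |C| + 1. *)
Definition ic_adj (T : finType) (e : rel T) (C D : {set T}) : bool :=
  [&& C \in min_covers e, D \in min_covers e, C != D &
      #|C :|: D| == #|C|.+1].

Definition ic_edges (T : finType) (e : rel T) : {set {set {set T}}} :=
  [set [set p.1; p.2] | p in [set p : {set T} * {set T} | ic_adj e p.1 p.2]].

(* H_r: vertices t_1..t_{2r} encoded as 0..2r-1, edges {t_i, t_{r+i}}. *)
Definition hr_edge (r : nat) : rel 'I_(r + r) :=
  fun x y => (x + r == y) || (y + r == x).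
Arguments hr_edge r x y : clear implicits.

(* Main.v *)
Require Import Defs.
From mathcomp Require Import all_boot zify.
Set Implicit Arguments. Unset Strict Implicit. Unset Printing Implicit Defensive.

Section HR.
Variable r : nat.
Notation I := ('I_(r + r)).

Definition idx (x : I) : 'I_r := match split x with inl j => j | inr j => j end.
Definition sd (x : I) : bool := if split x is inr _ then true else false.
Definition pt (j : 'I_r) (b : bool) : I := if b then rshift r j else lshift r j.

Lemma idx_pt j b : idx (pt j b) = j.
Proof. by case: b; rewrite /idx /pt ?(unsplitK (inl _ : 'I_r + 'I_r)) ?(unsplitK (inr _ : 'I_r + 'I_r)). Qed.
Lemma sd_pt j b : sd (pt j b) = b.
Proof. by case: b; rewrite /sd /pt ?(unsplitK (inl _ : 'I_r + 'I_r)) ?(unsplitK (inr _ : 'I_r + 'I_r)). Qed.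
Lemma pt_idx x : pt (idx x) (sd x) = x.
Proof. rewrite -[RHS]splitK /idx /sd /pt; by case: (split x). Qed.

Lemma hr_edgeE x y : hr_edge r x y = (idx x == idx y) && (sd x != sd y).
Proof.
rewrite -(pt_idx x) -(pt_idx y) !idx_pt !sd_pt.
move: (idx x) (idx y) (sd x) (sd y) => j k [] [];
rewrite /hr_edge /pt /= -!val_eqE /=; have := ltn_ord j; have := ltn_ord k.
- move=> *; rewrite andbF; apply/negbTE/negP; case/orP=> /eqP; lia.
- move=> *; apply/idP/idP; [case/orP=> /eqP|move=>/eqP]; lia.
- move=> *; apply/idP/idP; [case/orP=> /eqP|move=>/eqP]; lia.
- move=> *; rewrite andbF; apply/negbTE/negP; case/orP=> /eqP; lia.
Qed.
End HR.
Lemma coverP (T : finType) (e : rel T) (C : {set T}) :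
  reflect (forall x y, e x y -> (x \in C) || (y \in C)) (is_cover e C).
Proof.
apply: (iffP forallP) => [h x y exy|h x]; first by have := forallP (h x) y; rewrite exy.
by apply/forallP => y; apply/implyP; apply: h.
Qed.

Section HR2.
Variable r : nat.
Notation I := ('I_(r + r)).
Notation E := (hr_edge r).

Definition K (S : {set 'I_r}) : {set I} := [set x | sd x == (idx x \in S)].

Lemma ptK j b S : (pt j b \in K S) = (b == (j \in S)).
Proof. by rewrite inE idx_pt sd_pt. Qed.

Lemma K_inj : injective K.
Proof.
move=> S S' h; apply/setP => j.
have := ptK j (j \in S) S; rewrite h ptK eqxx.
by case: (j \in S); case: (j \in S').
Qed.

Lemma edge_pt j b : E (pt j b) (pt j (~~ b)).
Proof. by rewrite hr_edgeE !idx_pt !sd_pt eqxx; case: b. Qed.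

Lemma edge_ptE j b y : E (pt j b) y -> y = pt j (~~ b).
Proof.
rewrite hr_edgeE idx_pt sd_pt => /andP[/eqP jy by_].
by rewrite -(pt_idx y) -jy; congr pt; case: b by_; case: (sd y).
Qed.

Lemma cover_K S : is_cover E (K S).
Proof.
apply/coverP => x y; rewrite -(pt_idx x) => /edge_ptE ->.
by rewrite !ptK; case: (sd x); case: (idx x \in S).
Qed.

Lemma minK S : K S \in min_covers E.
Proof.
rewrite inE; apply/minsetP; split; first exact: cover_K.
move=> B /coverP cB sB; apply/eqP; rewrite eqEsubset sB /=.
apply/subsetP => x xK.
have := cB _ _ (edge_pt (idx x) (sd x)); rewrite pt_idx; case/orP=> // yB.
have := subsetP sB _ yB; rewrite ptK; move: xK; rewrite inE.
by case: (sd x); case: (idx x \in S).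
Qed.

Lemma min_coversK C : C \in min_covers E -> C = K [set j | pt j true \in C].
Proof.
rewrite inE => /minsetP[/coverP cC mC]; apply/setP => x.
rewrite -(pt_idx x); move: (idx x) (sd x) => j [].
  by rewrite ptK inE; case: (pt j true \in C).
rewrite ptK inE.
have := cC _ _ (edge_pt j false) => /= h.
case: (boolP (pt j true \in C)) => tC; last by move: h; rewrite (negbTE tC) orbF.
apply/negbTE/negP => fC.
have cC' : is_cover E (C :\ pt j false).
  apply/coverP => u v uv; rewrite !inE.
  case: (eqVneq u (pt j false)) => [eu|nu].
    move: uv; rewrite eu => /edge_ptE ->; rewrite /= tC andbT.
    by apply/eqP => /(congr1 (@sd r)); have:= sd_pt j true; have := sd_pt j false; rewrite /pt => -> ->.
  case: (eqVneq v (pt j false)) => [ev|nv].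
    move: uv; rewrite ev => uv.
    have : E (pt j false) u by move: uv; rewrite !hr_edgeE eq_sym [sd (pt j false) == _]eq_sym.
    by move/edge_ptE => ->; rewrite tC.
  by move: (cC _ _ uv); case: (u \in C); case: (v \in C).
have := mC _ cC' (subsetDl _ _) => /setP/(_ (pt j false)).
by rewrite !inE eqxx fC.
Qed.
End HR2.

Lemma cardUD (T : finType) (A B : {set T}) : #|A :|: B| = #|A| + #|B :\: A|.
Proof. have := cardsID A B; rewrite cardsU setIC; lia. Qed.

Section HR3.
Variable r : nat.
Notation I := ('I_(r + r)).
Notation E := (hr_edge r).

Lemma pt_inj b : injective (fun j : 'I_r => pt j b).
Proof. by move=> j k /(congr1 (@idx r)); rewrite !idx_pt. Qed.

Lemma pt_injF (F : 'I_r -> bool) : injective (fun j : 'I_r => pt j (F j)).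
Proof. by move=> j k /(congr1 (@idx r)); rewrite !idx_pt. Qed.

Lemma card_K (S : {set 'I_r}) : #|K S| = r.
Proof.
have -> : K S = [set pt j (j \in S) | j in 'I_r].
  apply/setP => x; rewrite -(pt_idx x) ptK.
  apply/eqP/imsetP => [->|[j _ ej]]; first by exists (idx x).
  by have := congr1 (@idx r) ej; have := congr1 (@sd r) ej; rewrite !idx_pt !sd_pt => -> ->.
by rewrite card_imset ?card_ord //; apply: pt_injF.
Qed.

Definition diff (S S' : {set 'I_r}) := [set j | (j \in S) != (j \in S')].

Lemma card_KU (S S' : {set 'I_r}) : #|K S :|: K S'| = r + #|diff S S'|.
Proof.
rewrite cardUD card_K; congr (_ + _).
have -> : K S' :\: K S = [set pt j (j \in S') | j in diff S S'].
  apply/setP => x; rewrite -(pt_idx x) in_setD !ptK.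
  apply/idP/imsetP => [/andP[h1 /eqP h2]|[j]].
    exists (idx x); last by rewrite -h2.
    by rewrite inE eq_sym -h2.
  rewrite inE => hj ej; have := congr1 (@idx r) ej; rewrite !idx_pt => ij.
  have := congr1 (@sd r) ej; rewrite !sd_pt => sj.
  by rewrite ij sj eqxx andbT; move: hj; case: (j \in S); case: (j \in S').
by rewrite card_imset //; apply: pt_injF.
Qed.

Lemma ic_adjK (S S' : {set 'I_r}) : ic_adj E (K S) (K S') = (#|diff S S'| == 1).
Proof.
rewrite /ic_adj !minK card_KU card_K /= (inj_eq (@K_inj r)).
case: eqP => [->|_] /=; last by apply/eqP/eqP; lia.
have -> : diff S' S' = set0 by apply/setP => j; rewrite !inE eqxx.
by rewrite cards0.
Qed.
End HR3.

Section HR4.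
Variable r : nat.
Notation I := ('I_(r + r)).
Notation E := (hr_edge r).

Definition flip (S : {set 'I_r}) j := [set i | (i \in S) (+) (i == j)].

Lemma diff_flip (S : {set 'I_r}) j : diff S (flip S j) = [set j].
Proof. by apply/setP => i; rewrite !inE; case: (i \in S); case: (i == j). Qed.

Lemma diff_sym (S S' : {set 'I_r}) : diff S S' = diff S' S.
Proof. by apply/setP => i; rewrite !inE eq_sym. Qed.

Lemma diff1 (S S' : {set 'I_r}) : #|diff S S'| == 1 -> exists j, S' = flip S j.
Proof.
case/cards1P => j hj; exists j; apply/setP => i.
move/setP: hj => /(_ i); rewrite !inE.
by case: (i \in S); case: (i \in S'); case: (i == j).
Qed.

Lemma min_covers_ex C : C \in min_covers E -> exists S, C = K S.
Proof. by move=> /min_coversK ->; eexists. Qed.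

Lemma nbrK (S : {set 'I_r}) : [set D | ic_adj E (K S) D] = [set K (flip S j) | j in 'I_r].
Proof.
apply/setP => D; rewrite inE; apply/idP/imsetP => [h|[j _ ->]].
  have := h; rewrite /ic_adj => /and4P[_ /min_covers_ex [S' eS'] _ _].
  move: h; rewrite eS' ic_adjK => /diff1 [j ->]; by exists j.
by rewrite ic_adjK diff_flip cards1.
Qed.

Lemma deg_K (S : {set 'I_r}) : #|[set D | ic_adj E (K S) D]| = r.
Proof.
rewrite nbrK card_imset ?card_ord // => j k /K_inj /setP /(_ j).
by rewrite !inE eqxx; case: (j \in S); case: eqP => // ->.
Qed.

Lemma min_coversE : min_covers E = [set K S | S in [set: {set 'I_r}]].
Proof.
apply/setP => C; apply/idP/imsetP => [/min_covers_ex [S ->]|[S _ ->]]; last exact: minK.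
by exists S.
Qed.

Lemma card_min_covers : #|min_covers E| = 2 ^ r.
Proof.
rewrite min_coversE card_imset; last exact: K_inj.
have := card_powerset [set: 'I_r]; rewrite cardsT card_ord => <-; apply: eq_card => S.
by rewrite powersetE subsetT in_setT.
Qed.

Definition cH (C : {set I}) := odd #|C :&: [set x | sd x]|.

Lemma cH_K (S : {set 'I_r}) : cH (K S) = odd #|S|.
Proof.
rewrite /cH; have -> : K S :&: [set x | sd x] = [set pt j true | j in S].
  apply/setP => x; rewrite -(pt_idx x) in_setI ptK inE sd_pt.
  apply/idP/imsetP => [/andP[/eqP h sx]|[j hj ej]].
    by exists (idx x); rewrite -?h // sx.
  have := congr1 (@idx r) ej; have := congr1 (@sd r) ej; rewrite !idx_pt !sd_pt => -> ->.
  by rewrite hj.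
by rewrite card_imset //; apply: pt_inj.
Qed.

Lemma parity_diff (S S' : {set 'I_r}) : #|diff S S'| == 1 -> odd #|S| != odd #|S'|.
Proof.
have hd : #|diff S S'| = #|S :\: S'| + #|S' :\: S|.
  have -> : diff S S' = (S :\: S') :|: (S' :\: S).
    by apply/setP => i; rewrite !inE; case: (i \in S); case: (i \in S').
  rewrite cardsU; have -> : (S :\: S') :&: (S' :\: S) = set0.
    by apply/setP => i; rewrite !inE; case: (i \in S); case: (i \in S').
  by rewrite cards0 subn0.
have h1 := cardsID S' S; have h2 := cardsID S S'.
rewrite hd -h1 -h2 setIC !oddD.
move: (#|S :\: S'|) (#|S' :\: S|) => [|[|a]] [|[|b]] //=; by case: (odd _).
Qed.

Lemma ic_adj_H C D : ic_adj E C D ->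
  exists S S', [/\ C = K S, D = K S' & #|diff S S'| == 1].
Proof.
move=> h; have := h; rewrite /ic_adj => /and4P[/min_covers_ex [S eS] /min_covers_ex [S' eS'] _ _].
by exists S, S'; split => //; rewrite -ic_adjK -eS -eS'.
Qed.

Lemma cH_adj C D : ic_adj E C D -> cH C != cH D.
Proof. by case/ic_adj_H => S [S' [-> -> h]]; rewrite !cH_K parity_diff. Qed.

Lemma ic_adj_symH C D : ic_adj E C D -> ic_adj E D C.
Proof. by case/ic_adj_H => S [S' [-> -> h]]; rewrite ic_adjK diff_sym. Qed.
End HR4.

Lemma count_edges (X : finType) (adj : rel X) (col : X -> bool) :
  (forall x y, adj x y -> adj y x) -> (forall x y, adj x y -> col x != col y) ->
  #|[set [set p.1; p.2] | p in [set p : X * X | adj p.1 p.2]]| * 2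
    = \sum_x #|[set y | adj x y]|.
Proof.
move=> hsym hcol.
set P := [set p : X * X | adj p.1 p.2].
have hP : #|P| = \sum_x #|[set y | adj x y]|.
  transitivity (\sum_x \sum_y (adj x y : nat)); last first.
    apply: eq_bigr => x _; rewrite -sum1_card [RHS]big_mkcond /=; apply: eq_bigr => y _.
    by rewrite inE; case: (adj _ _).
  rewrite pair_big /= -sum1_card [LHS]big_mkcond; apply: eq_bigr => p _.
  by rewrite inE; case: (adj _ _).
rewrite -hP -(cardsID [set p : X * X | col p.1] P).
set P1 := P :&: _; set P2 := P :\: _.
pose sw := fun p : X * X => (p.2, p.1).
have swi : injective sw by move=> [a b] [c d] [-> ->].
have colsw p : adj p.1 p.2 -> col p.2 = ~~ col p.1.
  by move/hcol; case: (col p.1); case: (col p.2).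
have e12 : #|P1| = #|P2|.
  apply/eqP; rewrite eqn_leq; apply/andP; split.
    rewrite -(card_imset P1 swi); apply: subset_leq_card; apply/subsetP => q /imsetP[p].
    by rewrite !inE => /andP[ha hc] ->; rewrite /= hsym // colsw // hc.
  rewrite -(card_imset P2 swi); apply: subset_leq_card; apply/subsetP => q /imsetP[p].
  by rewrite !inE => /andP[hc ha] ->; rewrite /= hsym // colsw // negbK (negbTE hc).
have -> : [set [set p.1; p.2] | p in P] = [set [set p.1; p.2] | p in P1].
  apply/setP => s; apply/imsetP/imsetP => [[p]|[p]].
    rewrite inE => ha ->; case: (boolP (col p.1)) => hc.
      by exists p => //; rewrite !inE ha hc.
    exists (sw p); first by rewrite !inE /= hsym // colsw // hc.
    by rewrite /= setUC.
  rewrite !inE => /andP[ha _] ->; exists p => //; by rewrite inE.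
rewrite card_in_imset -?e12 ?muln2 ?addnn //.
move=> [a b] [c d]; rewrite !inE /= => /andP[ab ca] /andP[cd cc] h.
have : a \in [set c; d] by rewrite -h !inE eqxx.
rewrite !inE => /orP[/eqP ea|/eqP ea]; last first.
  by move: (hcol _ _ cd); rewrite -ea ca cc.
subst c.
have : b \in [set a; d] by rewrite -h !inE eqxx orbT.
rewrite !inE => /orP[/eqP eb|/eqP -> //].
by move: (hcol _ _ ab); rewrite eb eqxx.
Qed.

Lemma partA (r : nat) : 0 < r ->
     [/\ bipartite (ic_adj (hr_edge r)),
         forall C, C \in min_covers (hr_edge r) ->
           #|[set D | ic_adj (hr_edge r) C D]| = r,
         #|min_covers (hr_edge r)| = 2 ^ r &
         #|ic_edges (hr_edge r)| = r * 2 ^ r.-1].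
Proof.
move=> r0; split.
- by exists (@cH r) => C D; apply: cH_adj.
- by move=> C /min_covers_ex [S ->]; apply: deg_K.
- exact: card_min_covers.
have := count_edges (@ic_adj_symH r) (@cH_adj r).
rewrite (bigID (mem (min_covers (hr_edge r)))) /=.
rewrite [in X in _ = _ + X]big1 ?addn0; last first.
  move=> C hC; apply/eqP; rewrite cards_eq0; apply/eqP/setP => D; rewrite !inE.
  by apply/negbTE; move: hC; rewrite /ic_adj; case: (C \in _).
rewrite (eq_bigr (fun _ => r)); last by move=> C /min_covers_ex [S ->]; apply: deg_K.
rewrite sum_nat_const card_min_covers /ic_edges.
case: r r0 => // r _ /=; rewrite expnS; move: (2 ^ r) => m; move: #|_| => n; nia.
Qed.

Section Hall.
Variable T : finType.
Definition NS (N : T -> {set T}) (S : {set T}) := \bigcup_(x in S) N x.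

Lemma NS_sub (N : T -> {set T}) (S : {set T}) x : x \in S -> N x \subset NS N S.
Proof. by move=> xS; apply/subsetP => y yN; apply/bigcupP; exists x. Qed.

Lemma hall n : forall (A : {set T}) (N : T -> {set T}), #|A| <= n ->
  (forall S : {set T}, S \subset A -> #|S| <= #|NS N S|) ->
  exists f : T -> T, {in A &, injective f} /\ {in A, forall x, f x \in N x}.
Proof.
elim: n => [|n IH] A N hA hH.
  move: hA; rewrite leqn0 cards_eq0 => /eqP ->; exists id; split => x; by rewrite inE.
case: (set_0Vmem A) => [->|[a aA]]; first by exists id; split => x; rewrite inE.
case: (boolP [exists S : {set T}, [&& S \proper A, S != set0 & #|NS N S| <= #|S|]]).
- case/existsP => S /and3P[pS nS tS].
  have sSA := proper_sub pS.
  have [f1 [i1 m1]] : exists f : T -> T, {in S &, injective f} /\ {in S, forall x, f x \in N x}.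
    apply: IH; last by move=> S' sS'; apply: hH; apply: subset_trans sSA.
    by move: pS; rewrite properEcard => /andP[_ h]; lia.
  set M := NS N S.
  have [f2 [i2 m2]] : exists f : T -> T, {in A :\: S &, injective f} /\
      {in A :\: S, forall x, f x \in N x :\: M}.
    apply: IH.
      have := cardsID S A; rewrite (setIidPr sSA); move: nS; rewrite -card_gt0; lia.
    move=> S' sS'.
    have dj : S' :&: S = set0.
      apply/setP => x; rewrite !inE; apply/negbTE/andP => [[xS' xS]].
      by move: (subsetP sS' _ xS'); rewrite !inE xS.
    have h1 : #|S'| + #|S| <= #|NS N (S' :|: S)|.
      have := hH (S' :|: S); rewrite cardsU dj cards0 subn0; apply.
      by rewrite subUset sSA (subset_trans sS') ?subsetDl.
    have h2 : NS N (S' :|: S) = M :|: NS N S' by rewrite /NS bigcup_setU setUC.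
    have h3 : NS N S' :\: M \subset NS (fun x => N x :\: M) S'.
      apply/subsetP => y; rewrite inE => /andP[yM /bigcupP [x xS' yN]].
      by apply/bigcupP; exists x => //; rewrite inE yM.
    move: h1; rewrite h2 cardUD => h1.
    have := subset_leq_card h3; move: tS; rewrite -/M; lia.
  exists (fun x => if x \in S then f1 x else f2 x); split.
    move=> x y xA yA /=.
    case: (boolP (x \in S)) => xS; case: (boolP (y \in S)) => yS.
    - exact: i1.
    - move=> e; have := m2 y; rewrite inE yS yA => /(_ isT); rewrite -e inE.
      by rewrite (subsetP (NS_sub N xS)) // m1.
    - move=> e; have := m2 x; rewrite inE xS xA => /(_ isT); rewrite e inE.
      by rewrite (subsetP (NS_sub N yS)) // m1.
    - by apply: i2; rewrite inE ?xS ?yS.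
  move=> x xA /=; case: (boolP (x \in S)) => xS; first exact: m1.
  by have := m2 x; rewrite !inE xS xA => /(_ isT) /andP[].
- move/existsPn => hn.
  have : 0 < #|N a|.
    by have := hH [set a]; rewrite sub1set aA cards1 /NS big_set1; apply.
  case/card_gt0P => b bN.
  have [f' [i' m']] : exists f : T -> T, {in A :\ a &, injective f} /\
      {in A :\ a, forall x, f x \in N x :\ b}.
    apply: IH; first by have := cardsD1 a A; rewrite aA; lia.
    move=> S' sS'; case: (set_0Vmem S') => [->|[z zS']]; first by rewrite cards0.
    have pS' : S' \proper A.
      rewrite properE (subset_trans sS') ?subsetDl //=; apply/negP => /subsetP /(_ a aA).
      by move/(subsetP sS'); rewrite !inE eqxx.
    have nz : S' != set0 by apply/set0Pn; exists z.
    have := hn S'; rewrite pS' nz /= -ltnNge => h.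
    have h3 : NS N S' :\ b \subset NS (fun x => N x :\ b) S'.
      apply/subsetP => y; rewrite !inE => /andP[yb /bigcupP [x xS' yN]].
      by apply/bigcupP; exists x => //; rewrite !inE yb.
    have := subset_leq_card h3; have := cardsD1 b (NS N S'); case: (b \in _) => /=; lia.
  exists (fun x => if x == a then b else f' x); split.
    move=> x y xA yA /=.
    case: (eqVneq x a) => xa; case: (eqVneq y a) => ya.
    - by rewrite xa ya.
    - move=> e; have := m' y; rewrite !inE ya yA => /(_ isT); by rewrite -e eqxx.
    - move=> e; have := m' x; rewrite !inE xa xA => /(_ isT); by rewrite e eqxx.
    - by apply: i'; rewrite !inE ?xa ?ya.
  move=> x xA /=; case: (eqVneq x a) => [->//|xa].
  by have := m' x; rewrite !inE xa xA => /(_ isT) /andP[].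
Qed.
End Hall.

Lemma bigmin_le (I : finType) (x : nat) (P : pred I) (F : I -> nat) j :
  P j -> \big[minn/x]_(i | P i) F i <= F j.
Proof.
move=> Pj; rewrite unlock; have : j \in index_enum I by rewrite mem_index_enum.
elim: (index_enum I) => //= i s IH; rewrite inE => /orP[/eqP <-|js].
  by rewrite Pj geq_minl.
case: (P i); last exact: IH.
by apply: leq_trans (geq_minr _ _) (IH js).
Qed.

Lemma cover_lb r (Y : {set 'I_(r + r)}) : is_cover (hr_edge r) Y -> r <= #|Y|.
Proof.
move/coverP => cY.
pose g (j : 'I_r) := if pt j false \in Y then pt j false else pt j true.
have gi : injective g.
  by move=> j k; rewrite /g; do 2 case: ifP => _; move/(congr1 (@idx r)); rewrite !idx_pt.
rewrite -{1}(card_ord r) -(card_imset _ gi); apply: subset_leq_card; apply/subsetP => y.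
case/imsetP => j _ ->; rewrite /g; case: ifP => // /negbT nY.
by have := cY _ _ (edge_pt j false); rewrite (negbTE nY).
Qed.

Lemma small_cover_min r (X : {set 'I_(r + r)}) :
  is_cover (hr_edge r) X -> #|X| <= r -> X \in min_covers (hr_edge r).
Proof.
move=> cX hX; rewrite inE; apply/minsetP; split => // B cB sB.
by apply/eqP; rewrite eqEcard sB /=; apply: leq_trans hX (cover_lb cB).
Qed.

Lemma partB_core (T : finType) (e : rel T) (A : {set T}) (f : T -> T) :
  symmetric e -> (forall x y, e x y -> (x \in A) != (y \in A)) ->
  {in A &, injective f} -> {in A, forall x, e x (f x)} -> #|~: A| = #|A| ->
  (forall C, C \in min_covers e -> #|C| = #|A|) ->
  let r := #|A| in
     exists phi : 'I_(r + r) -> T,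
       [/\ bijective phi,
           forall x y, hr_edge r x y -> e (phi x) (phi y),
           forall C, C \in min_covers e ->
             phi @^-1: C \in min_covers (hr_edge r),
           forall C D, ic_adj e C D ->
             ic_adj (hr_edge r) (phi @^-1: C) (phi @^-1: D) &
           bipartite (ic_adj e)].
Proof.
move=> esym hAB fi fe hB hun r.
have fA x : x \in A -> f x \notin A.
  by move=> xA; have := hAB _ _ (fe x xA); rewrite xA; case: (f x \in A).
pose a (j : 'I_r) : T := enum_val j.
have aA j : a j \in A by apply: enum_valP.
have ai : injective a by apply: enum_val_inj.
pose phi (x : 'I_(r + r)) := if sd x then f (a (idx x)) else a (idx x).
have phii : injective phi.
  move=> x y; rewrite -(pt_idx x) -(pt_idx y) /phi !idx_pt !sd_pt.
  case: (sd x); case: (sd y) => /=.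
  - by move/(fi _ _ (aA _) (aA _))/ai => ->.
  - by move=> h; have := fA _ (aA (idx x)); rewrite h aA.
  - by move=> h; have := fA _ (aA (idx y)); rewrite -h aA.
  - by move/ai => ->.
have phib : bijective phi.
  apply: (@inj_card_bij _ _ phi phii).
  by rewrite card_ord -(cardsC A) hB.
have hpre (C : {set T}) : #|phi @^-1: C| = #|C|.
  rewrite -(on_card_preimset (onW_bij (mem C) phib)); apply: eq_card => x.
  by rewrite !inE.
have phie x y : hr_edge r x y -> e (phi x) (phi y).
  rewrite hr_edgeE => /andP[/eqP ixy sxy]; rewrite /phi ixy.
  case: (sd x) (sd y) sxy => [] [] //= _; last exact: fe.
  by rewrite esym; apply: fe.
have hmin C : C \in min_covers e -> phi @^-1: C \in min_covers (hr_edge r).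
  move=> hC; apply: small_cover_min; last by rewrite hpre hun.
  move: hC; rewrite inE => /minsetP[/coverP cC _]; apply/coverP => x y /phie /cC.
  by rewrite !inE.
have hadj C D : ic_adj e C D -> ic_adj (hr_edge r) (phi @^-1: C) (phi @^-1: D).
  case/and4P => hC hD nCD hU; apply/and4P; split; rewrite ?hmin //.
    apply: contra nCD => /eqP h; apply/eqP/setP => y.
    case: phib => g _ gK; rewrite -(gK y).
    by move/setP: h => /(_ (g y)); rewrite !inE.
  by rewrite -preimsetU !hpre.
exists phi; split => //.
by exists (fun C : {set T} => cH (phi @^-1: C)) => C D /hadj; apply: cH_adj.
Qed.

Lemma side_min (T : finType) (e : rel T) (A : {set T}) :
  (forall x y, e x y -> (x \in A) != (y \in A)) -> no_isolated e ->
  A \in min_covers e.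
Proof.
move=> hAB hni; rewrite inE; apply/minsetP; split.
  by apply/coverP => x y /hAB; case: (x \in A); case: (y \in A).
move=> B /coverP cB sB; apply/eqP; rewrite eqEsubset sB /=; apply/subsetP => x xA.
have [y exy] := hni x.
have yA : y \notin A by move: (hAB _ _ exy); rewrite xA; case: (y \in A).
have := cB _ _ exy; case/orP => // yB.
by move: (subsetP sB _ yB); rewrite (negbTE yA).
Qed.

Lemma partB (T : finType) (e : rel T) (r : nat) :
     simple_graph e -> unmixed e -> bipartite e -> no_isolated e ->
     r = alpha0 e ->
     exists phi : 'I_(r + r) -> T,
       [/\ bijective phi,
           forall x y, hr_edge r x y -> e (phi x) (phi y),
           forall C, C \in min_covers e ->
             phi @^-1: C \in min_covers (hr_edge r),
           forall C D, ic_adj e C D ->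
             ic_adj (hr_edge r) (phi @^-1: C) (phi @^-1: D) &
           bipartite (ic_adj e)].
Proof.
move=> [esym _] hun [c hc] hni hr.
pose A := [set x | c x].
have hAB x y : e x y -> (x \in A) != (y \in A) by rewrite !inE; apply: hc.
have hAB' x y : e x y -> (x \in ~: A) != (y \in ~: A).
  by rewrite !inE; move/hc; case: (c x); case: (c y).
have mA := side_min hAB hni.
have mB := side_min hAB' hni.
have hun' C : C \in min_covers e -> #|C| = #|A| by move=> hC; apply: hun.
have hB : #|~: A| = #|A| by apply: hun'.
have cov_lb C : is_cover e C -> #|A| <= #|C|.
  move=> cC; have [D mD sD] := minset_exists cC.
  by rewrite -(hun' D) ?inE ?subset_leq_card.
have halpha : alpha0 e = #|A|.
  apply/eqP; rewrite eqn_leq; apply/andP; split.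
    rewrite /alpha0; apply: (@bigmin_le _ #|T| (is_cover e) (fun C : {set T} => #|C|) A).
    by move: mA; rewrite inE => /minsetP[].
  rewrite /alpha0; apply: (big_ind (fun m => #|A| <= m)).
  - exact: max_card.
  - by move=> m n h1 h2; rewrite leq_min h1 h2.
  - exact: cov_lb.
have [f [fi fN]] : exists f : T -> T, {in A &, injective f} /\
    {in A, forall x, f x \in [set y | e x y]}.
  apply: (@hall _ #|A|) => // S sSA.
  set X := (A :\: S) :|: NS (fun x => [set y | e x y]) S.
  have inN u v : u \in S -> e u v -> v \in NS (fun x => [set y | e x y]) S.
    by move=> uS euv; apply/bigcupP; exists u => //; rewrite inE.
  have cX : is_cover e X.
    apply/coverP => x y exy; rewrite !inE.
    case: (boolP (c x)) => cx.
      case: (boolP (x \in S)) => xS /=; last by [].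
      by rewrite (inN x y xS exy) !orbT.
    have cy : c y by move: (hc _ _ exy); rewrite (negbTE cx); case: (c y).
    case: (boolP (y \in S)) => yS /=; last by rewrite cy !orbT.
    by rewrite (inN y x yS); rewrite ?orbT // esym.
  have := cov_lb _ cX; have := leq_card_setU (A :\: S) (NS (fun x => [set y | e x y]) S).
  rewrite cardsD (setIidPr sSA) => /leqifP; case: ifP => _ h1 h2.
    have := subset_leq_card sSA; move: h1 h2; rewrite -/X; lia.
  have := subset_leq_card sSA; move: h1 h2; rewrite -/X; lia.
rewrite hr halpha.
have fe : {in A, forall x, e x (f x)} by move=> x xA; have := fN x xA; rewrite inE.
exact: (partB_core esym hAB fi fe hB hun').
Qed.

Theorem proposition4p9 :
  (forall r : nat, 0 < r ->
     [/\ bipartite (ic_adj (hr_edge r)),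
         forall C, C \in min_covers (hr_edge r) ->
           #|[set D | ic_adj (hr_edge r) C D]| = r,
         #|min_covers (hr_edge r)| = 2 ^ r &
         #|ic_edges (hr_edge r)| = r * 2 ^ r.-1])
  /\
  (forall (T : finType) (e : rel T) (r : nat),
     simple_graph e -> unmixed e -> bipartite e -> no_isolated e ->
     r = alpha0 e ->
     exists phi : 'I_(r + r) -> T,
       [/\ bijective phi,
           forall x y, hr_edge r x y -> e (phi x) (phi y),
           forall C, C \in min_covers e ->
             phi @^-1: C \in min_covers (hr_edge r),
           forall C D, ic_adj e C D ->
             ic_adj (hr_edge r) (phi @^-1: C) (phi @^-1: D) &
           bipartite (ic_adj e)]).
Proof. split; [exact: partA | exact: partB]. Qed.
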